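(* Let $(\mathcal X,\mathcal F,t)$ be an instance of SET-COVER and let $\mathbb G$ be the graph constructed from it as described in the context. If $E'$ is a good 3-completion set of $\mathbb G$, then $\{S_j\in\mathcal F : (S_j,P)\in E'\}$ is a set cover of $\mathcal X$ of size $|E'|$.
   Context: SET-COVER instance $(\mathcal X,\mathcal F,t)$: a finite set $\mathcal X$ of items, a family $\mathcal F$ of nonempty subsets of $\mathcal X$ such that every item lies in some set of $\mathcal F$, and an integer $t$; a set cover is a subfamily $\mathcal S\subseteq\mathcal F$ with $\bigcup_{S\in\mathcal S}S=\mathcal X$. The graph $\mathbb G$ is built as follows: (1) for each set $S_j\in\mathcal F$ add a vertex $S_j$ (set vertex); (2) for each item $x_i\in\mathcal X$ add an item subgraph $I_i$ consisting of $2|\mathcal X|$ new isolated vertices; (3) for each $x_i$ and $S_j$ with $x_i\in S_j$, join $S_j$ to every vertex of $I_i$; (4) for each edge $(S_j,v)$ added in (3), add a new (auxiliary) vertex $w$ adjacent to $S_j$ and $v$; (5) add a common vertex $P$ adjacent to every vertex of every $I_i$. A connected graph has a $(3,1)$-cover if each edge lies in a triangle; a 3-completion set of $\mathbb G$ is a set $E'$ of non-edges of $\mathbb G$ such that $\mathbb G\cup E'$ has a $(3,1)$-cover; it is good if $E'\subseteq\{(S_j,P): S_j\in\mathcal F\}$. *)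

(* Defs.v *)
From mathcomp Require Import all_boot.
Set Implicit Arguments. Unset Strict Implicit. Unset Printing Implicit Defensive.

Section Construction.
Variable X : finType.

(* index type of the 2|X| vertices of an item subgraph I_i *)
Definition idx := 'I_(2 * #|X|).

(* Vertex type of the graph G:
   inl (inl S)          : set vertex S_j   (valid iff S \in F)
   inl (inr (x, k))     : k-th vertex of the item subgraph I_x
   inr (inl (S, x, k))  : auxiliary vertex w of the edge (S, (x,k))
                          (valid iff S \in F and x \in S)
   inr (inr tt)         : the common vertex P *)
Definition vertex : finType :=
  (({set X} + (X * idx)) + (({set X} * X * idx) + unit))%type.

Definition VS (A : {set X}) : vertex := inl (inl A).
Definition VI (x : X) (k : idx) : vertex := inl (inr (x, k)).
Definition VW (A : {set X}) (x : X) (k : idx) : vertex := inr (inl (A, x, k)).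
Definition VP : vertex := inr (inr tt).

Variable F : {set {set X}}.

Definition validv (v : vertex) : bool :=
  match v with
  | inl (inl A) => A \in F
  | inl (inr _) => true
  | inr (inl (A, x, _)) => (A \in F) && (x \in A)
  | inr (inr _) => true
  end.

(* oriented description of the edges added in steps (3),(4),(5) *)
Definition base_edge (u v : vertex) : bool :=
  match u, v with
  | inl (inl A), inl (inr (x, _)) => (A \in F) && (x \in A)
  | inr (inl (A, x, _)), inl (inl A') => [&& A' == A, A \in F & x \in A]
  | inr (inl (A, x, k)), inl (inr (x', k')) =>
      [&& x' == x, k' == k, A \in F & x \in A]
  | inr (inr _), inl (inr _) => true
  | _, _ => false
  end.

Definition adjG (u v : vertex) : bool := base_edge u v || base_edge v u.

(* E' is a set of unordered pairs of vertices, each given as a 2-element set *)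
Definition non_edge (e : {set vertex}) : Prop :=
  exists u v, [/\ u != v, validv u, validv v, ~~ adjG u v & e = [set u; v]].

Definition adjU (E' : {set {set vertex}}) (u v : vertex) : bool :=
  adjG u v || ((u != v) && ([set u; v] \in E')).

(* a connected graph (on the vertices validv) with adjacency adj has a
   (3,1)-cover if each edge lies in a triangle *)
Definition has_31_cover (adj : rel vertex) : Prop :=
  (forall u v, validv u -> validv v ->
     connect (fun a b => [&& validv a, validv b & adj a b]) u v) /\
  (forall u v, validv u -> validv v -> adj u v ->
     exists w, [&& validv w, adj u w & adj v w]).

Definition completion3 (E' : {set {set vertex}}) : Prop :=
  (forall e, e \in E' -> non_edge e) /\ has_31_cover (adjU E').

Definition good (E' : {set {set vertex}}) : Prop :=
  forall e, e \in E' -> exists2 A, A \in F & e = [set VS A; VP].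

End Construction.

Definition set_cover_instance (X : finType) (F : {set {set X}}) : Prop :=
  (forall A, A \in F -> A != set0) /\ (forall x : X, exists2 A, A \in F & x \in A).

Definition is_set_cover (X : finType) (F C : {set {set X}}) : Prop :=
  C \subset F /\ \bigcup_(A in C) A = [set: X].

(* Main.v *)
Require Import Defs.
From mathcomp Require Import all_boot.

Lemma pairE (X : finType) (F : {set {set X}}) (E' : {set {set vertex X}}) u v :
  good F E' -> u != v -> [set u; v] \in E' ->
  exists2 A, A \in F & (u = VS A /\ v = @VP X) \/ (u = @VP X /\ v = VS A).
Proof.
move=> g neq /g [A AF e]; exists A => //.
have hu : u \in [set VS A; @VP X] by rewrite -e set21.
have hv : v \in [set VS A; @VP X] by rewrite -e set22.
move: hu hv neq; rewrite !inE.
by case/orP=>/eqP->; case/orP=>/eqP->; rewrite ?eqxx //; auto.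
Qed.

Arguments pairE {X F E' u v}.

Theorem lemma1 (X : finType) (F : {set {set X}}) (t : nat)
  (E' : {set {set vertex X}}) :
  set_cover_instance F ->
  completion3 F E' ->
  good F E' ->
  is_set_cover F [set S in F | [set VS S; @VP X] \in E'] /\
  #|[set S in F | [set VS S; @VP X] \in E']| = #|E'|.
Proof.
move=> _ [_ [_ tri]] g; split; first split.
- by apply/subsetP => A; rewrite inE => /andP[].
- apply/setP => x; rewrite inE; apply/bigcupP.
  have H : 0 < 2 * #|X| by rewrite muln_gt0 /=; apply/card_gt0P; exists x.
  pose k : idx X := Ordinal H.
  have [w /and3P [vw a1 a2]] := tri (@VP X) (VI x k) isT isT isT.
  move: a1 a2; rewrite /adjU.
  case/orP => [a1 | /andP [n1 /[dup] m1 /(pairE g n1) [B BF [[e1 e2]|[_ e2]]]]] //.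
  + case: w vw a1 => [[A|[y k']]|[[[A y] k']|[]]] //= _ _.
    move=> /andP [n2 /(pairE g n2) [B BF [[e1 e2]|[e1 e2]]]] //.
  + subst w; case/orP => [a2 | /andP [n2 /(pairE g n2) [C CF [[e1 e2]|[e1 e2]]]]] //.
    move: a2; rewrite /adjG /= => /andP [_ xB].
    exists B => //; rewrite inE BF /= setUC //.
- rewrite -(card_in_imset (f := fun S => [set VS S; @VP X])).
  + have -> : [set [set VS S; @VP X] | S in [set S in F | [set VS S; @VP X] \in E']] = E' => //; apply/setP => e; apply/imsetP/idP.
    * by case=> A; rewrite inE => /andP [_ h] ->.
    * move=> /[dup] eE /g [A AF eq]; exists A => //; rewrite inE AF /= -eq //.
  + move=> A B _ _ /= e.
    have : VS A \in [set VS B; @VP X] by rewrite -e set21.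
    by rewrite !inE => /orP [/eqP [] |].
Qed.
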